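(* Problem (S) has at most one weak solution belonging to $C^1[0,1]$.
   Context: Fix $\epsilon>0$, $\Omega_A>0$, $\Omega_D>0$, $\alpha,\beta\in\mathbb{R}$. Problem (S): $\tfrac{\epsilon}{2}\rho''+(2\rho-1)\rho'+\Omega_A(1-\rho)-\Omega_D\rho=0$ on $(0,1)$, $\rho(0)=\alpha$, $\rho(1)=1-\beta$. A weak solution of (S) is a function $\rho\in W^{1,2}(0,1)$ with $\rho(0)=\alpha$, $\rho(1)=1-\beta$ and $\int_0^1\big[\tfrac{\epsilon}{2}\rho'\varphi'-\big((2\rho-1)\rho'+\Omega_A(1-\rho)-\Omega_D\rho\big)\varphi\big]dx=0$ for all $\varphi\in W^{1,2}_0(0,1)$. *)

(* Defs.v *)
From Stdlib Require Import Reals.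
Open Scope R_scope.

(* [f] is C^1 on the closed interval [0,1], with derivative [df]:
   at every x in [0,1], [df x] is the derivative of [f] at x taken within
   [0,1] (one-sided at the endpoints), and [df] is continuous on [0,1]
   (relative to [0,1]). *)
Definition C1_01 (f df : R -> R) : Prop :=
  (forall x, 0 <= x <= 1 ->
     limit1_in (fun y => (f y - f x) / (y - x))
               (fun y => 0 <= y <= 1 /\ y <> x) (df x) x) /\
  (forall x, 0 <= x <= 1 ->
     limit1_in df (fun y => 0 <= y <= 1) (df x) x).

(* Weak formulation of problem (S) for a C^1 function [rho] with derivative
   [drho] (for a C^1 function the weak derivative is the classical one).
   Test functions: C^1[0,1] functions vanishing at 0 and 1 (a subclass of
   W^{1,2}_0(0,1)). *)
Definition weak_solution_S (eps OmA OmD alpha beta : R) (rho drho : R -> R)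
  : Prop :=
  rho 0 = alpha /\ rho 1 = 1 - beta /\
  forall phi dphi : R -> R, C1_01 phi dphi -> phi 0 = 0 -> phi 1 = 0 ->
    exists pr : Riemann_integrable
      (fun x => eps / 2 * drho x * dphi x
                - ((2 * rho x - 1) * drho x + OmA * (1 - rho x) - OmD * rho x)
                  * phi x) 0 1,
      RiemannInt pr = 0.

(* Main.v *)
Require Import Defs.
From Stdlib Require Import Reals Lra Psatz.
From Coquelicot Require Import Coquelicot.
Open Scope R_scope.
Definition cl (x:R) := Rmax 0 (Rmin 1 x).
Lemma cl_cases x : (cl x = 0 /\ x <= 0) \/ (cl x = x /\ 0 <= x <= 1) \/ (cl x = 1 /\ 1 <= x).
Proof. unfold cl, Rmax, Rmin; repeat destruct Rle_dec; lra. Qed.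
Definition S t := 3*t*t - 2*t*t*t.
Definition dS t := 6*t*(1-t).
Lemma S_quad a b : Rabs (S (cl b) - S (cl a) - dS (cl a) * (b - a)) <= 9 * ((b-a)*(b-a)).
Proof.
  pose proof (Rle_0_sqr (b-a)) as Hs; unfold Rsqr in Hs.
  destruct (cl_cases a) as [[Ea Ha]|[[Ea Ha]|[Ea Ha]]]; rewrite Ea;
  destruct (cl_cases b) as [[Eb Hb]|[[Eb Hb]|[Eb Hb]]]; rewrite Eb; unfold S, dS.
  - replace (3 * 0 * 0 - 2 * 0 * 0 * 0 - (3 * 0 * 0 - 2 * 0 * 0 * 0) - 6 * 0 * (1 - 0) * (b - a)) with 0 by ring.
    rewrite Rabs_R0; nra.
  - replace (3 * b * b - 2 * b * b * b - (3 * 0 * 0 - 2 * 0 * 0 * 0) - 6 * 0 * (1 - 0) * (b - a)) with (b*b*(3-2*b)) by ring.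
    assert (0 <= b*b) by nra. assert (b*b <= (b-a)*(b-a)) by nra.
    apply Rabs_le; split; nra.
  - replace (3 * 1 * 1 - 2 * 1 * 1 * 1 - (3 * 0 * 0 - 2 * 0 * 0 * 0) - 6 * 0 * (1 - 0) * (b - a)) with 1 by ring.
    rewrite Rabs_R1; nra.
  - replace (3 * 0 * 0 - 2 * 0 * 0 * 0 - (3 * a * a - 2 * a * a * a) - 6 * a * (1 - a) * (b - a))
      with (-(a*a*(3-2*a)) - 6*a*(1-a)*(b-a)) by ring.
    replace (-(a*a*(3-2*a)) - 6*a*(1-a)*(b-a)) with ((a*a*(3-4*a)) - 6*a*(1-a)*b) by ring.
    assert (0 <= a*a) by nra. assert (a*a <= (b-a)*(b-a)) by nra.
    assert (0 <= a*(1-a)) by nra. assert (a*(1-a) <= a) by nra. assert (0<= a*(-b)) by nra.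
    assert (a*(-b) <= (b-a)*(b-a)) by nra.
    assert (0 <= a*(1-a)*(-b)) by nra. assert (a*(1-a)*(-b) <= a*(-b)) by nra.
    apply Rabs_le; split; nra.
  - replace (3 * b * b - 2 * b * b * b - (3 * a * a - 2 * a * a * a) - 6 * a * (1 - a) * (b - a))
      with ((b-a)*(b-a)*(3-2*b-4*a)) by ring.
    assert (0 <= (b-a)*(b-a)) by nra.
    apply Rabs_le; split; nra.
  - replace (3 * 1 * 1 - 2 * 1 * 1 * 1 - (3 * a * a - 2 * a * a * a) - 6 * a * (1 - a) * (b - a))
      with ((1-a)*(1-a)*(1-4*a) - 6*a*(1-a)*(b-1)) by ring.
    assert (0 <= (1-a)*(1-a)) by nra. assert ((1-a)*(1-a) <= (b-a)*(b-a)) by nra.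
    assert (0 <= a*(1-a)) by nra. assert (a*(1-a) <= (1-a)) by nra. assert (0<= (1-a)*(b-1)) by nra.
    assert ((1-a)*(b-1) <= (b-a)*(b-a)) by nra.
    assert (0 <= a*(1-a)*(b-1)) by nra. assert (a*(1-a)*(b-1) <= (1-a)*(b-1)) by nra.
    apply Rabs_le; split; nra.
  - replace (3 * 0 * 0 - 2 * 0 * 0 * 0 - (3 * 1 * 1 - 2 * 1 * 1 * 1) - 6 * 1 * (1 - 1) * (b - a)) with (-1) by ring.
    apply Rabs_le; split; nra.
  - replace (3 * b * b - 2 * b * b * b - (3 * 1 * 1 - 2 * 1 * 1 * 1) - 6 * 1 * (1 - 1) * (b - a))
      with (-((1-b)*(1-b)*(1+2*b))) by ring.
    assert (0 <= (1-b)*(1-b)) by nra. assert ((1-b)*(1-b) <= (b-a)*(b-a)) by nra.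
    apply Rabs_le; split; nra.
  - replace (3 * 1 * 1 - 2 * 1 * 1 * 1 - (3 * 1 * 1 - 2 * 1 * 1 * 1) - 6 * 1 * (1 - 1) * (b - a)) with 0 by ring.
    rewrite Rabs_R0; nra.
Qed.

Lemma cl_in x : 0 <= cl x <= 1.
Proof. unfold cl, Rmax, Rmin; repeat destruct Rle_dec; lra. Qed.
Lemma cl_id x : 0 <= x <= 1 -> cl x = x.
Proof. unfold cl, Rmax, Rmin; repeat destruct Rle_dec; lra. Qed.
Lemma cl_0 x : x <= 0 -> cl x = 0.
Proof. unfold cl, Rmax, Rmin; repeat destruct Rle_dec; lra. Qed.
Lemma cl_1 x : 1 <= x -> cl x = 1.
Proof. unfold cl, Rmax, Rmin; repeat destruct Rle_dec; lra. Qed.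
Lemma cl_lip x y : Rabs (cl x - cl y) <= Rabs (x - y).
Proof. unfold cl, Rmax, Rmin; repeat destruct Rle_dec; split_Rabs; lra. Qed.

Lemma lim_get F D l x : limit1_in F D l x -> forall e, e > 0 ->
  exists a, a > 0 /\ forall y, D y -> Rabs (y - x) < a -> Rabs (F y - l) < e.
Proof.
  intros H e He; destruct (H e He) as [a [Ha H']]; exists a; split; auto.
  intros y Dy Hy; apply (H' y); split; auto.
Qed.

Definition ext (f df : R -> R) x := f (cl x) + df (cl x) * (x - cl x).

Lemma ext_eq f df x : 0 <= x <= 1 -> ext f df x = f x.
Proof. intros H; unfold ext; rewrite cl_id by auto; ring. Qed.

Lemma ext_deriv f df : C1_01 f df -> forall x, derivable_pt_lim (ext f df) x (df (cl x)).
Proof.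
  intros [Hd Hc] x e He.
  destruct (Rlt_le_dec x 0) as [Hx|Hx].
  { exists (mkposreal (-x) ltac:(lra)). intros h Hh Hh'. simpl in Hh'.
    apply Rabs_def2 in Hh'.
    unfold ext; rewrite (cl_0 (x+h)) by lra; rewrite (cl_0 x) by lra.
    replace ((f 0 + df 0 * (x + h - 0) - (f 0 + df 0 * (x - 0))) / h - df 0) with 0 by (field; auto).
    rewrite Rabs_R0; lra. }
  destruct (Rlt_le_dec 1 x) as [Hx1|Hx1].
  { exists (mkposreal (x-1) ltac:(lra)). intros h Hh Hh'. simpl in Hh'.
    apply Rabs_def2 in Hh'.
    unfold ext; rewrite (cl_1 (x+h)) by lra; rewrite (cl_1 x) by lra.
    replace ((f 1 + df 1 * (x + h - 1) - (f 1 + df 1 * (x - 1))) / h - df 1) with 0 by (field; auto).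
    rewrite Rabs_R0; lra. }
  destruct (lim_get _ _ _ _ (Hd x (conj Hx Hx1)) e He) as [a [Ha H']].
  assert (Hin : forall h, h <> 0 -> Rabs h < a -> 0 <= x + h <= 1 ->
     Rabs ((ext f df (x + h) - ext f df x) / h - df (cl x)) < e).
  { intros h Hh Hha Hxh. rewrite !ext_eq by lra. rewrite cl_id by lra.
    replace ((f (x+h) - f x)/h) with ((f (x+h) - f x)/(x+h-x)) by (f_equal; ring).
    apply H'. split; [lra|]. intro Hc'; apply Hh; lra.
    replace (x + h - x) with h by ring; auto. }
  destruct (Req_dec x 0) as [E0|E0].
  { subst x. exists (mkposreal (Rmin a 1) ltac:(apply Rmin_pos; lra)). intros h Hh Hh'. simpl in Hh'.
    pose proof (Rmin_l a 1); pose proof (Rmin_r a 1).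
    destruct (Rlt_le_dec h 0) as [Hn|Hn].
    - unfold ext; rewrite (cl_0 (0+h)) by lra; rewrite (cl_0 0) by lra.
      replace ((f 0 + df 0 * (0 + h - 0) - (f 0 + df 0 * (0 - 0))) / h - df 0) with 0 by (field; auto).
      rewrite Rabs_R0; lra.
    - apply Hin; auto; try lra. apply Rabs_def2 in Hh'; lra. }
  destruct (Req_dec x 1) as [E1|E1].
  { subst x. exists (mkposreal (Rmin a 1) ltac:(apply Rmin_pos; lra)). intros h Hh Hh'. simpl in Hh'.
    pose proof (Rmin_l a 1); pose proof (Rmin_r a 1).
    destruct (Rlt_le_dec 0 h) as [Hn|Hn].
    - unfold ext; rewrite (cl_1 (1+h)) by lra; rewrite (cl_1 1) by lra.
      replace ((f 1 + df 1 * (1 + h - 1) - (f 1 + df 1 * (1 - 1))) / h - df 1) with 0 by (field; auto).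
      rewrite Rabs_R0; lra.
    - apply Hin; auto; try lra. apply Rabs_def2 in Hh'; lra. }
  exists (mkposreal (Rmin a (Rmin x (1-x))) ltac:(apply Rmin_pos; [lra|apply Rmin_pos; lra])).
  intros h Hh Hh'. simpl in Hh'.
  pose proof (Rmin_l a (Rmin x (1-x))); pose proof (Rmin_r a (Rmin x (1-x))).
  pose proof (Rmin_l x (1-x)); pose proof (Rmin_r x (1-x)).
  apply Rabs_def2 in Hh' as Hb.
  apply Hin; auto; lra.
Qed.

Lemma dcl_cont f df : C1_01 f df -> forall x, continuity_pt (fun y => df (cl y)) x.
Proof.
  intros [Hd Hc] x e He.
  destruct (lim_get _ _ _ _ (Hc (cl x) (cl_in x)) e He) as [a [Ha H']].
  exists a; split; auto. intros y [_ Hy]. simpl in *; unfold R_dist in *.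
  apply H'. apply cl_in. eapply Rle_lt_trans; [apply cl_lip|]; auto.
Qed.

Lemma glob_C1 f df : (forall x, derivable_pt_lim f x (df x)) ->
  (forall x, continuity_pt df x) -> C1_01 f df.
Proof.
  intros Hd Hc; split.
  - intros x _ e He. destruct (Hd x e He) as [d Hdd]. exists d; split; [apply cond_pos|].
    intros y [[_ Hyx] Hy]. simpl in *; unfold R_dist in *.
    assert (Hne : y - x <> 0) by (intro; apply Hyx; lra).
    specialize (Hdd (y - x) Hne Hy). replace (x + (y-x)) with y in Hdd by ring. exact Hdd.
  - intros x _ e He. destruct (Hc x e He) as [a [Ha H']]. exists a; split; auto.
    intros y [_ Hy]. destruct (Req_dec y x) as [E|E].
    + subst; simpl; unfold R_dist; rewrite Rminus_diag, Rabs_R0; lra.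
    + apply H'. split; [split; [exact I| auto]|exact Hy].
Qed.

Lemma quad_deriv (u du : R -> R) L : 0 <= L ->
  (forall a b, Rabs (u b - u a - du a * (b - a)) <= L * ((b-a)*(b-a))) ->
  forall x, derivable_pt_lim u x (du x).
Proof.
  intros HL H x e He.
  assert (Hp : 0 < e / (L+1)) by (apply Rdiv_lt_0_compat; lra).
  exists (mkposreal _ Hp). intros h Hh Hh'. simpl in Hh'.
  specialize (H x (x+h)). replace (x + h - x) with h in H by ring.
  replace ((u (x + h) - u x) / h - du x) with ((u (x + h) - u x - du x * h) / h) by (field; auto).
  unfold Rdiv. rewrite Rabs_mult, Rabs_inv.
  assert (Ha : 0 < Rabs h) by (apply Rabs_pos_lt; auto).
  assert (Hhh : h * h = Rabs h * Rabs h) by (rewrite <- Rabs_mult; rewrite Rabs_right; [ring| nra]).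
  rewrite Hhh in H.
  apply (Rmult_lt_reg_r (Rabs h)); auto.
  rewrite Rmult_assoc, Rinv_l by lra. rewrite Rmult_1_r.
  assert (L * Rabs h <= L * (e / (L+1))) by (apply Rmult_le_compat_l; lra).
  assert (L * (e / (L+1)) < e).
  { replace (L * (e / (L+1))) with (e - e/(L+1)) by (field; lra). lra. }
  nra.
Qed.

Lemma lip_cont (f : R -> R) x L : 0 <= L ->
  (forall y, Rabs (f y - f x) <= L * Rabs (y - x)) -> continuity_pt f x.
Proof.
  intros HL H e He.
  assert (Hp : 0 < e / (L+1)) by (apply Rdiv_lt_0_compat; lra).
  exists (e/(L+1)); split; auto. intros y [_ Hy]. simpl in *; unfold R_dist in *.
  specialize (H y).
  assert (L * Rabs (y - x) <= L * (e / (L+1))) by (apply Rmult_le_compat_l; lra).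
  assert (L * (e / (L+1)) < e).
  { replace (L * (e / (L+1))) with (e - e/(L+1)) by (field; lra). lra. }
  lra.
Qed.

Definition hh th s := S (cl ((s - th) / th)).
Definition dhh th s := dS (cl ((s - th) / th)) / th.

Lemma hh_bound th : 0 < th -> forall a b,
  Rabs (hh th b - hh th a - dhh th a * (b - a)) <= 9 / (th*th) * ((b-a)*(b-a)).
Proof.
  intros Ht a b. unfold hh, dhh.
  replace (dS (cl ((a - th) / th)) / th * (b - a)) with
    (dS (cl ((a - th) / th)) * ((b - th)/th - (a - th)/th)) by (field; lra).
  eapply Rle_trans; [apply S_quad|]. right; field; lra.
Qed.

Lemma hh_deriv th : 0 < th -> forall x, derivable_pt_lim (hh th) x (dhh th x).
Proof.
  intros Ht. apply (quad_deriv _ _ (9/(th*th))).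
  - apply Rlt_le, Rdiv_lt_0_compat; nra.
  - apply hh_bound; auto.
Qed.

Lemma dS_lip s t : Rabs (dS (cl s) - dS (cl t)) <= 6 * Rabs (s - t).
Proof.
  pose proof (cl_in s); pose proof (cl_in t); pose proof (cl_lip s t).
  unfold dS. replace (6 * cl s * (1 - cl s) - 6 * cl t * (1 - cl t)) with
    (6 * (cl s - cl t) * (1 - cl s - cl t)) by ring.
  rewrite !Rabs_mult. rewrite (Rabs_right 6) by lra.
  assert (Rabs (1 - cl s - cl t) <= 1) by (apply Rabs_le; lra).
  pose proof (Rabs_pos (cl s - cl t)). pose proof (Rabs_pos (1 - cl s - cl t)). nra.
Qed.

Lemma dhh_cont th : 0 < th -> forall x, continuity_pt (dhh th) x.
Proof.
  intros Ht x. apply (lip_cont _ _ (6 / (th*th))).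
  - apply Rlt_le, Rdiv_lt_0_compat; nra.
  - intros y. unfold dhh.
    replace (dS (cl ((y - th) / th)) / th - dS (cl ((x - th) / th)) / th) with
      ((dS (cl ((y - th) / th)) - dS (cl ((x - th) / th))) * / th) by (field; lra).
    rewrite Rabs_mult, (Rabs_right (/th)) by (left; apply Rinv_0_lt_compat; lra).
    eapply Rle_trans. apply Rmult_le_compat_r. left; apply Rinv_0_lt_compat; lra. apply dS_lip.
    replace ((y - th) / th - (x - th) / th) with ((y - x) * / th) by (field; lra).
    rewrite Rabs_mult, (Rabs_right (/th)) by (left; apply Rinv_0_lt_compat; lra).
    right; field; lra.
Qed.

Lemma div_sign th s : 0 < th -> ((s - th)/th) * th = s - th.
Proof. intros; field; lra. Qed.

Lemma hh_nonneg th s : 0 <= hh th s.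
Proof. unfold hh, S. pose proof (cl_in ((s-th)/th)). set (t := cl ((s-th)/th)) in *. assert (0 <= t*t) by nra. nra. Qed.

Lemma hh_zero th s : 0 < th -> s <= th -> hh th s = 0.
Proof.
  intros Ht Hs. pose proof (div_sign th s Ht).
  unfold hh. rewrite cl_0 by nra. unfold S; ring.
Qed.

Lemma hh_one th s : 0 < th -> 2 * th <= s -> hh th s = 1.
Proof.
  intros Ht Hs. pose proof (div_sign th s Ht).
  unfold hh. rewrite cl_1 by nra. unfold S; ring.
Qed.

Lemma dhh_nonneg th s : 0 < th -> 0 <= dhh th s.
Proof.
  intros Ht. unfold dhh, dS. pose proof (cl_in ((s-th)/th)). set (t := cl ((s-th)/th)) in *.
  apply Rmult_le_pos; [nra| left; apply Rinv_0_lt_compat; lra].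
Qed.

Lemma dhh_w2 th s : 0 < th -> s * s * dhh th s <= 6 * th.
Proof.
  intros Ht. pose proof (div_sign th s Ht). unfold dhh.
  destruct (Rle_lt_dec s th) as [H1|H1].
  { rewrite cl_0 by nra. unfold dS. replace (s * s * (6 * 0 * (1 - 0) / th)) with 0 by (field; lra). lra. }
  destruct (Rle_lt_dec (2*th) s) as [H2|H2].
  { rewrite cl_1 by nra. unfold dS. replace (s * s * (6 * 1 * (1 - 1) / th)) with 0 by (field; lra). lra. }
  set (X := (s - th)/th) in *.
  assert (0 <= X <= 1) by nra.
  rewrite cl_id by auto. unfold dS.
  assert (Es : s = th * (1 + X)) by nra. rewrite Es.
  replace (th * (1 + X) * (th * (1 + X)) * (6 * X * (1 - X) / th)) with
    (6 * th * ((1+X)*(1+X)*(X*(1-X)))) by (field; lra).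
  assert ((1+X)*(1+X) <= 4) by nra. pose proof (Rle_0_sqr (X - 1/2)) as Hq; unfold Rsqr in Hq. assert (0 <= X*(1-X) <= 1/4) by (split; nra).
  assert (0 <= (1+X)*(1+X)) by nra.
  assert ((1+X)*(1+X)*(X*(1-X)) <= 1) by nra. nra.
Qed.

Lemma whh_nonneg th s : 0 < th -> 0 <= s * hh th s.
Proof.
  intros Ht. destruct (Rle_lt_dec s th).
  - rewrite hh_zero by auto; lra.
  - pose proof (hh_nonneg th s); nra.
Qed.

Lemma isR_conv (f g : R -> R) a b (l l' : R) : is_RInt f a b l -> l = l' ->
  (forall x, f x = g x) -> is_RInt g a b l'.
Proof. intros H <- Hfg. apply (is_RInt_ext f); auto. Qed.

Lemma RInt_lb (f : R -> R) a b m : a <= b -> ex_RInt f a b ->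
  (forall x, a < x < b -> m <= f x) -> (b - a) * m <= RInt f a b.
Proof.
  intros Hab Hex H.
  replace ((b-a)*m) with (RInt (fun _ => m) a b).
  - apply RInt_le; auto. apply ex_RInt_const.
  - rewrite RInt_const. reflexivity.
Qed.

Lemma cp_plus f g x : continuity_pt f x -> continuity_pt g x -> continuity_pt (fun y => f y + g y) x.
Proof. exact (continuity_pt_plus f g x). Qed.
Lemma cp_minus f g x : continuity_pt f x -> continuity_pt g x -> continuity_pt (fun y => f y - g y) x.
Proof. exact (continuity_pt_minus f g x). Qed.
Lemma cp_mult f g x : continuity_pt f x -> continuity_pt g x -> continuity_pt (fun y => f y * g y) x.
Proof. exact (continuity_pt_mult f g x). Qed.
Lemma cp_const (c : R) x : continuity_pt (fun _ => c) x.
Proof. exact (continuity_pt_const (fun _ => c) x (fun _ _ => eq_refl)). Qed.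
Lemma cp_opp f x : continuity_pt f x -> continuity_pt (fun y => - f y) x.
Proof. exact (continuity_pt_opp f x). Qed.
Lemma cp_comp f g x : continuity_pt f x -> continuity_pt g (f x) -> continuity_pt (fun y => g (f y)) x.
Proof. exact (continuity_pt_comp f g x). Qed.

Lemma dp_minus f g x l1 l2 : derivable_pt_lim f x l1 -> derivable_pt_lim g x l2 ->
  derivable_pt_lim (fun y => f y - g y) x (l1 - l2).
Proof. exact (derivable_pt_lim_minus f g x l1 l2). Qed.
Lemma dp_plus f g x l1 l2 : derivable_pt_lim f x l1 -> derivable_pt_lim g x l2 ->
  derivable_pt_lim (fun y => f y + g y) x (l1 + l2).
Proof. exact (derivable_pt_lim_plus f g x l1 l2). Qed.
Lemma dp_mult f g x l1 l2 : derivable_pt_lim f x l1 -> derivable_pt_lim g x l2 ->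
  derivable_pt_lim (fun y => f y * g y) x (l1 * g x + f x * l2).
Proof. exact (derivable_pt_lim_mult f g x l1 l2). Qed.
Lemma dp_const (c : R) x : derivable_pt_lim (fun _ => c) x 0.
Proof. exact (derivable_pt_lim_const c x). Qed.

Lemma exR f a b : a <= b -> (forall x, continuity_pt f x) -> ex_RInt f a b.
Proof. intros Hab H. apply (ex_RInt_continuous (V:=R_CompleteNormedModule)). intros z _. apply continuity_pt_filterlim, H. Qed.

Lemma alg eps G2 th hp dw w g : 0 < eps -> 0 <= hp -> g*g <= G2 -> w*w*hp <= 6*th -> 0 <= G2 ->
  -(3*th*G2/eps) <= eps/2*dw*(hp*dw) + w*g*(hp*dw).
Proof.
  intros He Hp Hg Hw HG.
  assert (H0 : 0 <= hp * ((eps*dw + w*g)*(eps*dw + w*g))) by (apply Rmult_le_pos; [lra| apply Rle_0_sqr]).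
  assert (H1 : 0 <= w*w*hp) by (apply Rmult_le_pos; [apply Rle_0_sqr| lra]).
  assert (H2 : hp*(w*w)*(g*g) <= 6*th*G2).
  { assert (0 <= g*g) by nra.
    apply Rle_trans with (w*w*hp*G2); [nra|]. apply Rmult_le_compat_r; auto. }
  set (X := eps/2*dw*(hp*dw) + w*g*(hp*dw)).
  assert (HX : X * (2*eps) >= -(6*th*G2)).
  { unfold X. nra. }
  replace (-(3*th*G2/eps)) with (-(6*th*G2) * / (2*eps)) by (field; lra).
  replace X with (X * (2*eps) * / (2*eps)) by (field; lra).
  apply Rmult_le_compat_r; [left; apply Rinv_0_lt_compat; lra| lra].
Qed.

Ltac cont := repeat first
  [ match goal with H : forall x, continuity_pt _ x |- _ => apply H end
  | apply cp_const | apply cp_minus | apply cp_plus | apply cp_mult | apply cp_opp ].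

Lemma half (eps OmA OmD alpha beta : R)
  (Heps : 0 < eps) (HA : 0 < OmA) (HD : 0 < OmD)
  (rho1 drho1 rho2 drho2 : R -> R) :
  C1_01 rho1 drho1 -> C1_01 rho2 drho2 ->
  weak_solution_S eps OmA OmD alpha beta rho1 drho1 ->
  weak_solution_S eps OmA OmD alpha beta rho2 drho2 ->
  forall x0, 0 <= x0 <= 1 -> rho1 x0 - rho2 x0 <= 0.
Proof.
  intros C1 C2 W1 W2 x0 Hx0.
  destruct (Rle_lt_dec (rho1 x0 - rho2 x0) 0) as [|HW]; [auto|exfalso].
  pose (W := rho1 x0 - rho2 x0). fold W in HW.
  pose (K := OmA + OmD). assert (HK : 0 < K) by (unfold K; lra).
  pose (r1 := ext rho1 drho1). pose (d1 := fun y => drho1 (cl y)).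
  pose (r2 := ext rho2 drho2). pose (d2 := fun y => drho2 (cl y)).
  assert (Dr1 : forall x, derivable_pt_lim r1 x (d1 x)) by (apply ext_deriv; auto).
  assert (Dr2 : forall x, derivable_pt_lim r2 x (d2 x)) by (apply ext_deriv; auto).
  assert (Cd1 : forall x, continuity_pt d1 x) by (apply (dcl_cont rho1); auto).
  assert (Cd2 : forall x, continuity_pt d2 x) by (apply (dcl_cont rho2); auto).
  assert (Cr1 : forall x, continuity_pt r1 x)
    by (intro x; apply derivable_continuous_pt; exists (d1 x); apply Dr1).
  assert (Cr2 : forall x, continuity_pt r2 x)
    by (intro x; apply derivable_continuous_pt; exists (d2 x); apply Dr2).
  pose (w := fun x => r1 x - r2 x). pose (dw := fun x => d1 x - d2 x).
  pose (g := fun x => r1 x + r2 x - 1).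
  assert (Dw : forall x, derivable_pt_lim w x (dw x)) by (intro x; apply dp_minus; auto).
  assert (Cw : forall x, continuity_pt w x) by (intro x; unfold w; cont).
  assert (Cdw : forall x, continuity_pt dw x) by (intro x; unfold dw; cont).
  assert (Cg : forall x, continuity_pt g x) by (intro x; unfold g; cont).
  destruct W1 as [W1a [W1b W1c]]. destruct W2 as [W2a [W2b W2c]].
  assert (w0 : w 0 = 0) by (unfold w, r1, r2; rewrite !ext_eq by lra; lra).
  assert (w1 : w 1 = 0) by (unfold w, r1, r2; rewrite !ext_eq by lra; lra).
  assert (wx0 : w x0 = W) by (unfold w, r1, r2, W; rewrite !ext_eq by lra; reflexivity).
  destruct (continuity_ab_maj (fun x => g x * g x) 0 1) as [Mx [HM _]].
  { lra. } { intros c _. cont. }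
  pose (G2 := g Mx * g Mx). assert (HG2 : 0 <= G2) by (unfold G2; nra).
  destruct (Cw x0 (W/2) ltac:(lra)) as [a [Ha Hwa]].
  assert (Hnear : forall y, Rabs (y - x0) < a -> W/2 < w y).
  { intros y Hy. destruct (Req_dec y x0) as [E|E]. { subst y. lra. }
    specialize (Hwa y (conj (conj I (not_eq_sym E)) Hy)). simpl in Hwa; unfold R_dist in Hwa.
    rewrite wx0 in Hwa. apply Rabs_def2 in Hwa. lra. }
  assert (Hx00 : 0 < x0). { destruct (Req_dec x0 0) as [E|E]; [|lra]. rewrite E, w0 in wx0; lra. }
  assert (Hx01 : x0 < 1). { destruct (Req_dec x0 1) as [E|E]; [|lra]. rewrite E, w1 in wx0; lra. }
  pose (p := Rmax 0 (x0 - a/2)). pose (q := Rmin 1 (x0 + a/2)).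
  assert (Hp0 : 0 <= p) by (unfold p; apply Rmax_l).
  assert (Hpq : p < q) by (unfold p, q, Rmax, Rmin; repeat destruct Rle_dec; lra).
  assert (Hq1 : q <= 1) by (unfold q; apply Rmin_l).
  assert (Hpqw : forall y, p <= y <= q -> W/2 < w y).
  { intros y Hy. apply Hnear. assert (x0 - a/2 <= p) by (unfold p; apply Rmax_r).
    assert (q <= x0 + a/2) by (unfold q; apply Rmin_r). apply Rabs_def1; lra. }
  pose (B := K * (q - p) * W). assert (HB : 0 < B) by (unfold B; apply Rmult_lt_0_compat; [apply Rmult_lt_0_compat|]; lra).
  pose (th := Rmin (W/4) (eps * B / (12 * (G2 + 1)))).
  assert (Hth : 0 < th) by (unfold th; apply Rmin_pos; [lra| apply Rdiv_lt_0_compat; nra]).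
  assert (Hth1 : th <= W/4) by (unfold th; apply Rmin_l).
  assert (Hth2 : th <= eps * B / (12 * (G2 + 1))) by (unfold th; apply Rmin_r).
  pose (phi := fun x => hh th (w x)). pose (dphi := fun x => dhh th (w x) * dw x).
  assert (Dphi : forall x, derivable_pt_lim phi x (dphi x)).
  { intro x. exact (derivable_pt_lim_comp w (hh th) x (dw x) (dhh th (w x)) (Dw x) (hh_deriv th Hth (w x))). }
  assert (Cphi : forall x, continuity_pt phi x).
  { intro x. apply derivable_continuous_pt. exists (dphi x). apply Dphi. }
  assert (Cdphi : forall x, continuity_pt dphi x).
  { intro x. unfold dphi. apply cp_mult; [|apply Cdw]. apply cp_comp; [apply Cw| apply dhh_cont; auto]. }
  assert (Hphi : C1_01 phi dphi) by (apply glob_C1; auto).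
  assert (phi0 : phi 0 = 0) by (unfold phi; rewrite w0; apply hh_zero; lra).
  assert (phi1 : phi 1 = 0) by (unfold phi; rewrite w1; apply hh_zero; lra).
  destruct (W1c phi dphi Hphi phi0 phi1) as [pr1 I1].
  destruct (W2c phi dphi Hphi phi0 phi1) as [pr2 I2].
  pose (E1 := fun x => eps / 2 * d1 x * dphi x
      - ((2 * r1 x - 1) * d1 x + OmA * (1 - r1 x) - OmD * r1 x) * phi x).
  pose (E2 := fun x => eps / 2 * d2 x * dphi x
      - ((2 * r2 x - 1) * d2 x + OmA * (1 - r2 x) - OmD * r2 x) * phi x).
  assert (HE1 : is_RInt E1 0 1 0).
  { pose proof (RInt_correct _ _ _ (ex_RInt_Reals_1 _ _ _ pr1)) as H.
    rewrite (RInt_Reals _ _ _ pr1), I1 in H.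
    revert H. apply is_RInt_ext. rewrite Rmin_left, Rmax_right by lra.
    intros x Hx. unfold E1, r1, d1. rewrite ext_eq, cl_id by lra. reflexivity. }
  assert (HE2 : is_RInt E2 0 1 0).
  { pose proof (RInt_correct _ _ _ (ex_RInt_Reals_1 _ _ _ pr2)) as H.
    rewrite (RInt_Reals _ _ _ pr2), I2 in H.
    revert H. apply is_RInt_ext. rewrite Rmin_left, Rmax_right by lra.
    intros x Hx. unfold E2, r2, d2. rewrite ext_eq, cl_id by lra. reflexivity. }
  pose (P := fun x => w x * g x).
  pose (dP := fun x => (2 * r1 x - 1) * d1 x - (2 * r2 x - 1) * d2 x).
  assert (DP : forall x, derivable_pt_lim P x (dP x)).
  { intro x. assert (Dg : derivable_pt_lim g x (d1 x + d2 x - 0)).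
    { unfold g. apply dp_minus; [apply dp_plus|apply dp_const]; auto. }
    pose proof (dp_mult _ _ _ _ _ (Dw x) Dg) as H.
    replace (dP x) with (dw x * g x + w x * (d1 x + d2 x - 0)); [exact H|].
    unfold dP, dw, g, w; ring. }
  assert (CP : forall x, continuity_pt P x) by (intro x; unfold P; cont).
  assert (CdP : forall x, continuity_pt dP x) by (intro x; unfold dP; cont).
  assert (HP : is_RInt (fun x => dP x * phi x + P x * dphi x) 0 1 0).
  { pose proof (is_RInt_derive (fun x => P x * phi x) (fun x => dP x * phi x + P x * dphi x) 0 1) as H.
    assert (H1 : forall x, Rmin 0 1 <= x <= Rmax 0 1 ->
      is_derive (fun x0 => P x0 * phi x0) x (dP x * phi x + P x * dphi x)).
    { intros x _. apply is_derive_Reals. apply dp_mult; auto. }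
    assert (H2 : forall x, Rmin 0 1 <= x <= Rmax 0 1 ->
      continuous (fun x0 => dP x0 * phi x0 + P x0 * dphi x0) x).
    { intros x _. apply continuity_pt_filterlim. cont. }
    specialize (H H1 H2).
    assert (E : forall l, is_RInt (fun x => dP x * phi x + P x * dphi x) 0 1 l -> l = 0 ->
       is_RInt (fun x => dP x * phi x + P x * dphi x) 0 1 0) by (intros; subst; auto).
    apply (E _ H). cbv beta. rewrite phi0, phi1. unfold minus, plus, opp; simpl. ring. }
  pose (Z := fun x => eps / 2 * dw x * dphi x + P x * dphi x + K * w x * phi x).
  assert (HZ : is_RInt Z 0 1 0).
  { pose proof (is_RInt_plus _ _ _ _ _ _ (is_RInt_minus _ _ _ _ _ _ HE1 HE2) HP) as H.
    assert (E : forall f l, is_RInt f 0 1 l -> l = 0 -> is_RInt f 0 1 0) by (intros; subst; auto).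
    apply E in H; [| unfold minus, plus, opp; simpl; ring].
    revert H. apply is_RInt_ext. intros x _.
    unfold Z, E1, E2, dP, P, w, dw, K, minus, plus, opp; simpl. ring. }
  pose (Lw := fun x => - (3 * th * G2 / eps) + K * (w x * phi x)).
  assert (ExZ : ex_RInt Z 0 1) by (exists 0; exact HZ).
  assert (Hle : RInt Lw 0 1 <= RInt Z 0 1).
  { apply RInt_le. lra. apply exR; [lra| intro x; unfold Lw; cont]. exact ExZ.
    intros x Hx.
    pose proof (alg eps G2 th (dhh th (w x)) (dw x) (w x) (g x) Heps (dhh_nonneg th (w x) Hth)
      (HM x ltac:(lra)) (dhh_w2 th (w x) Hth) HG2) as Ha'.
    unfold Lw, Z, dphi, P. replace (K * w x * phi x) with (K * (w x * phi x)) by ring. lra. }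
  rewrite (is_RInt_unique _ _ _ _ HZ) in Hle.
  assert (ExWP : ex_RInt (fun x => w x * phi x) 0 1) by (apply exR; [lra| intro; cont]).
  pose (Iw := RInt (fun x => w x * phi x) 0 1).
  assert (HL : RInt Lw 0 1 = -(3*th*G2/eps) + K * Iw).
  { apply is_RInt_unique.
    pose proof (is_RInt_plus _ _ _ _ _ _ (is_RInt_const 0 1 (-(3*th*G2/eps)))
       (is_RInt_scal _ _ _ K _ (RInt_correct _ _ _ ExWP))) as H.
    apply (isR_conv _ _ _ _ _ _ H).
    - unfold Iw, plus, scal; simpl; unfold mult; simpl. ring.
    - intro x. unfold Lw, plus, scal; simpl; unfold mult; simpl. reflexivity. }
  assert (HIw : (q - p) * (W/2) <= Iw).
  { pose (f := fun x => w x * phi x).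
    assert (Ex1 : ex_RInt f 0 p) by (apply exR; [lra| intro; unfold f; cont]).
    assert (Ex2 : ex_RInt f p q) by (apply exR; [lra| intro; unfold f; cont]).
    assert (Ex3 : ex_RInt f q 1) by (apply exR; [lra| intro; unfold f; cont]).
    assert (C1' : plus (RInt f 0 p) (RInt f p q) = RInt f 0 q) by (apply RInt_Chasles; auto).
    assert (C2' : plus (RInt f 0 q) (RInt f q 1) = RInt f 0 1)
      by (apply RInt_Chasles; [apply (ex_RInt_Chasles _ _ p); auto| auto]).
    unfold plus in C1', C2'; simpl in C1', C2'.
    assert (R1 : (p - 0) * 0 <= RInt f 0 p).
    { apply RInt_lb; auto. intros x _. unfold f, phi. apply whh_nonneg; auto. }
    assert (R3 : (1 - q) * 0 <= RInt f q 1).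
    { apply RInt_lb; auto. intros x _. unfold f, phi. apply whh_nonneg; auto. }
    assert (R2 : (q - p) * (W/2) <= RInt f p q).
    { apply RInt_lb; auto; [lra|]. intros x Hx. unfold f, phi.
      pose proof (Hpqw x ltac:(lra)). rewrite hh_one by lra. lra. }
    unfold Iw. fold f. lra. }
  assert (Hc : 3*th*G2/eps <= B/4).
  { apply (Rmult_le_reg_r eps); auto.
    replace (3*th*G2/eps*eps) with (3*th*G2) by (field; lra).
    assert (HH : eps*B/(12*(G2+1)) * (12*(G2+1)) = eps*B) by (field; lra).
    assert (th * (12*(G2+1)) <= eps*B) by nra.
    nra. }
  assert (K * ((q - p) * (W/2)) <= K * Iw) by (apply Rmult_le_compat_l; lra).
  assert (Hb2 : K * ((q - p) * (W/2)) = B/2) by (unfold B; field).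
  lra.
Qed.

Theorem mainTheorem7 (eps OmA OmD alpha beta : R)
  (Heps : 0 < eps) (HA : 0 < OmA) (HD : 0 < OmD)
  (rho1 drho1 rho2 drho2 : R -> R) :
  C1_01 rho1 drho1 -> C1_01 rho2 drho2 ->
  weak_solution_S eps OmA OmD alpha beta rho1 drho1 ->
  weak_solution_S eps OmA OmD alpha beta rho2 drho2 ->
  forall x, 0 <= x <= 1 -> rho1 x = rho2 x.
Proof.
  intros C1 C2 W1 W2 x Hx.
  pose proof (half eps OmA OmD alpha beta Heps HA HD rho1 drho1 rho2 drho2 C1 C2 W1 W2 x Hx).
  pose proof (half eps OmA OmD alpha beta Heps HA HD rho2 drho2 rho1 drho1 C2 C1 W2 W1 x Hx).
  lra.
Qed.
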